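(* Let $\mu$ be a probability measure on $\{0,1\}^{\mathbb{N}}$, $X\sim\mu$, and for $i,j\in\mathbb{N}$ let $p_i=\mathbb{E}[X_i]$ and $r_{ij}=\mathbb{E}[X_iX_j]$. Then for all $i,j\in\mathbb{N}$ and all $t\ge0$, $$\mathbb{E}\exp\left\{t\left[(X_i-p_i)-(X_j-p_j)\right]\right\}\le\exp\left(\frac{t^2}{\log\frac{2}{p_i+p_j-2r_{ij}}}\right).$$
   Context: When $p_i+p_j-2r_{ij}=0$, the right-hand side is interpreted as $\exp(0)=1$. *)

(* Defs.v *)
From HB Require Import structures.
From mathcomp Require Import all_boot all_order all_algebra.
From mathcomp Require Import all_classical all_reals all_analysis.
Set Implicit Arguments. Unset Strict Implicit. Unset Printing Implicit Defensive.
Import Order.TTheory GRing.Theory Num.Theory.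
Local Open Scope classical_set_scope.
Local Open Scope ring_scope.

(* The product sigma-algebra on {0,1}^N = nat -> bool: generated by the
   coordinate cylinders {w | w i = true}, i in N. *)
Definition coord_cyl : set (set (nat -> bool)) :=
  [set [set w : nat -> bool | w i] | i in [set: nat]].

Definition cantor := g_sigma_algebraType coord_cyl.

Definition X {R : realType} (i : nat) (w : cantor) : R := (w i)%:R.

(* p_i = E[X_i], r_ij = E[X_i X_j] (finite since X_i is bounded). *)
Definition pE {R : realType} (mu : probability cantor R) (i : nat) : R :=
  fine ('E_mu[X i])%E.
Definition rE {R : realType} (mu : probability cantor R) (i j : nat) : R :=
  fine ('E_mu[X i \* X j])%E.

(* exp(t^2 / log(2/q)), with the convention that it equals exp(0) = 1
   when q = 0. *)
Definition subg_bound {R : realType} (t q : R) : R :=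
  if q == 0 then 1 else expR (t ^+ 2 / ln (2 / q)).

(* Main.v *)
Require Import Defs.
From HB Require Import structures.
From mathcomp Require Import all_boot all_order all_algebra.
From mathcomp Require Import all_classical all_reals all_analysis.
From mathcomp Require Import measurable_realfun.
From mathcomp Require Import ring lra.
Import Order.TTheory GRing.Theory Num.Theory.
Import numFieldNormedType.Exports.
Local Open Scope ring_scope.

Module Aux.
#[local] Set Implicit Arguments.
#[local] Unset Strict Implicit.
Local Open Scope classical_set_scope.
Section S.
Variable R : realType.


Lemma expR_cmp (x y al be ga : R) :
  (forall k, x ^+ k / k`!%:R <= al * (y ^+ k / k`!%:R)
      + (k == 0)%:R * be + (k == 1)%:R * ga) ->
  expR x <= al * expR y + (be + ga).
Proof.
move=> H.
have cy := is_cvg_series_exp_coeff y.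
have Hc : (fun n => al * series (exp_coeff y) n + (be + ga)) @ \oo -->
   al * expR y + (be + ga).
  apply: cvgD; last exact: cvg_cst.
  apply: cvgMr. exact: cy.
rewrite -(cvg_lim _ Hc) //.
apply: ler_lim; [exact: is_cvg_series_exp_coeff| by apply/cvg_ex; eexists; exact: Hc|].
near=> n.
have n2 : (2 <= n)%N by near: n; exists 2%N.
rewrite /series /=.
destruct n as [|[|n]]; [by []|by []|].
apply: (@le_trans _ _ (\sum_(0 <= k < n.+2) (al * exp_coeff y k + (k == 0)%:R * be + (k == 1)%:R * ga))).
  by apply: ler_sum => k _; apply: H.
have Hb (c : R) (j : nat) : (j < n.+2)%N -> \sum_(0 <= k < n.+2) (k == j)%:R * c = c.
  move=> jn; rewrite (@big_cat_nat _ _ _ j) ?(ltnW jn) //= big_nat_recl //=.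
  rewrite eqxx mul1r big1_seq; last first.
    by move=> k /andP[_]; rewrite mem_index_iota => /andP[_ kj]; rewrite ltn_eqF ?mul0r.
  rewrite big1_seq ?add0r ?addr0 //.
  by move=> k /andP[_]; rewrite mem_index_iota => /andP[kj _]; rewrite gtn_eqF ?mul0r.
rewrite !big_split /= -mulr_sumr Hb // Hb // addrA.
Unshelve. all: by end_near.
Qed.

Lemma expR_scale (l T : R) : 0 <= l <= 1 -> 0 <= T ->
  expR (l * T) <= l ^+ 2 * expR T + ((1 - l ^+ 2) + (l - l ^+ 2) * T).
Proof.
move=> /andP[l0 l1] T0; apply: expR_cmp => -[|[|k]] /=.
- rewrite (_ : 0`!%:R = 1 :> R) // !expr0 invr1 !mulr1 !mul1r !mul0r addr0; lra.
- rewrite factS fact0 muln1 !expr1 !divr1 !mul0r !mul1r addr0; nra.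
- rewrite !mul0r !addr0 mulrA; apply: ler_wpM2r; first by rewrite invr_ge0.
  rewrite exprMn ler_wpM2r ?exprn_ge0 // -addn2 exprD mulrC.
  by rewrite ler_piMr ?exprn_ge0 // exprn_ile1.
Qed.

Lemma expR_sinh (t : R) : 0 <= t -> expR (- t) <= expR t - 2 * t.
Proof.
move=> t0.
suff h : expR (- t) <= 1 * expR t + (0 + - (2 * t)) by rewrite mul1r add0r in h.
apply: expR_cmp => -[|[|k]] /=.
- rewrite (_ : 0`!%:R = 1 :> R) // !expr0 invr1 !mul1r !mul0r !addr0; lra.
- rewrite factS fact0 muln1 !expr1 !divr1 !mul0r !mul1r; lra.
- rewrite !mul0r !addr0 mul1r; apply: ler_wpM2r; first by rewrite invr_ge0.
  have h := @exprn_ge0 _ k.+2 t t0.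
  rewrite exprNn -signr_odd; case: (odd _) => /=.
  + rewrite expr1 mulN1r; lra.
  + by rewrite expr0 mul1r.
Qed.

Lemma region1_poly (L q eh : R) : 0 < L -> 0 <= q -> eh <= 4096/2401 ->
  (L <= 5/2 -> 2/5 * (5/2 - L) <= q) ->
  L * (2 * eh - q * (1 + (L + 1/2))) <= (L + 1/2) ^+ 2.
Proof.
move=> L0 q0 eh1 hq.
have h1 : L * (2 * eh) <= L * (2 * (4096/2401)) by nra.
case: (leP L (12/5)) => L3.
- have hq' : 2/5 * (5/2 - L) <= q by apply: hq; lra.
  have h2 : L * (q * (1 + (L + 1/2))) >= L * (2/5 * (5/2 - L) * (1 + (L + 1/2))).
    apply: ler_wpM2l; first lra. apply: ler_wpM2r; lra.
  have h3 : 0 <= (12/5 - L) * (L - 1/2) ^+ 2 by apply: mulr_ge0; [lra| apply: sqr_ge0].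
  nra.
- nra.
Qed.

Lemma region2_poly (L q t em : R) : 0 < L -> 0 <= q <= 1 ->
  q * (2 * L + 1/2) <= 2 -> L + 1/2 <= t -> em <= q / 3 ->
  L * (t * (1 + q) + em - 1) <= t ^+ 2.
Proof.
move=> L0 /andP[q0 q1] hq ht hem.
have h1 : L * em <= L * (q / 3) by apply: ler_wpM2l; lra.
have h2 : q * L * (L + 5/6) <= 3/2 * L + 1/4.
  have h3 : q * (2 * L + 1/2) * (L + 5/6) * L <= 2 * (L + 5/6) * L.
    apply: ler_wpM2r; first lra. apply: ler_wpM2r; lra.
  have h4 : 0 <= L ^+ 2 - 5/12 * L + 1/8.
    have -> : L ^+ 2 - 5/12 * L + 1/8 = (L - 5/24) ^+ 2 + (1/8 - 25/576) by field.
    apply: addr_ge0; [apply: sqr_ge0| lra].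
  nra.
have h5 : 0 <= (t - (L + 1/2)) * (t + (L + 1/2) - L * (1 + q)).
  apply: mulr_ge0; nra.
nra.
Qed.

Lemma expR18 : expR (1/8 : R) <= 8/7.
Proof.
have h := expR_ge1Dx (- (1/8 : R)).
rewrite expRN in h.
have e0 := expR_gt0 (1/8 : R).
have h2 : expR (1/8 : R) * (expR (1/8))^-1 = 1 by rewrite mulfV // gt_eqF.
nra.
Qed.
Lemma expR_pow (x : R) n : expR (n%:R * x) = expR x ^+ n.
Proof. exact: expRM_natl. Qed.
Lemma expR12_ub : expR (1/2 : R) <= 4096/2401.
Proof.
have -> : (1/2 : R) = 4%:R * (1/8) by rewrite -[4%:R]/(4 : R); field.
rewrite expR_pow.
apply: (@le_trans _ _ ((8/7) ^+ 4)).
  apply: lerXn2r; rewrite ?nnegrE ?expR_ge0 ?expR18 //; lra.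
rewrite !exprS expr0; lra.
Qed.
Lemma expR32_ub : expR (3/2 : R) <= 5.
Proof.
have -> : (3/2 : R) = 12%:R * (1/8) by rewrite -[12%:R]/(12 : R); field.
rewrite expR_pow.
apply: (@le_trans _ _ ((8/7) ^+ 12)).
  apply: lerXn2r; rewrite ?nnegrE ?expR_ge0 ?expR18 //; lra.
rewrite !exprS expr0; lra.
Qed.
Lemma expR34_lb : 2 <= expR (3/4 : R).
Proof.
have -> : (3/4 : R) = 8%:R * (3/32) by rewrite -[8%:R]/(8 : R); field.
rewrite expR_pow.
apply: (@le_trans _ _ ((35/32) ^+ 8)).
  rewrite !exprS expr0; lra.
apply: lerXn2r; rewrite ?nnegrE; [lra | exact: expR_ge0 | ].
have := expR_ge1Dx (3/32 : R); lra.
Qed.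


Lemma main_real (a b t : R) : 0 <= a -> 0 <= b -> a + b <= 1 -> 0 <= t ->
  (1 - (a + b)) * expR (t * - (a - b)) + a * expR (t * (1 - (a - b)))
   + b * expR (t * (-1 - (a - b))) <= subg_bound t (a + b).
Proof.
move=> a0 b0 q1 t0.
have eS : (1 - (a + b)) * expR (t * - (a - b)) + a * expR (t * (1 - (a - b)))
   + b * expR (t * (-1 - (a - b))) =
   expR (t * - (a - b)) * (1 - (a + b) + a * expR t + b * expR (- t)).
  rewrite (_ : t * (1 - (a - b)) = t * - (a - b) + t); last by ring.
  rewrite (_ : t * (-1 - (a - b)) = t * - (a - b) + - t); last by ring.
  rewrite !expRD; ring.
rewrite eS /subg_bound; clear eS.
have [q0|qn0] := eqVneq (a + b) 0.
  have a00 : a = 0 by lra.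
  have b00 : b = 0 by lra.
  rewrite a00 b00 subrr oppr0 mulr0 expR0 !mul0r !addr0 subr0 mul1r; lra.
have qp : 0 < a + b by rewrite lt_def qn0 /=; lra.
set q := a + b in q1 qn0 qp *.
set m := a - b.
set e1 := expR t. set e2 := expR (- t).
have e12 : e1 * e2 = 1 by rewrite /e1 /e2 expRxMexpNx_1.
have e1p : 0 < e1 by exact: expR_gt0.
have e2p : 0 < e2 by exact: expR_gt0.
have q2 : 0 < 2 / q by apply: divr_gt0.
set L := ln (2 / q).
have eL : expR L = 2 / q by rewrite /L lnK // posrE.
have qeL : q * expR L = 2 by rewrite eL mulrC divfK // gt_eqF.
have L0 : 0 < L.
  rewrite /L; apply: ln_gt0; rewrite ltr_pdivlMr // mul1r; lra.
have eh1 := expR12_ub.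
have eh2 : 3/2 <= expR (1/2 : R) by have := expR_ge1Dx (1/2 : R); lra.
set T0 := L + 1/2.
have eT : q * expR T0 = 2 * expR (1/2) by rewrite /T0 expRD mulrA qeL.
have emp : 0 < expR (t * - m) by exact: expR_gt0.
case: (leP t T0) => htT.
-
  have hG : 1 - q + a * e1 + b * e2 <= expR (a * (e1 - 1) + b * (e2 - 1)).
    have := expR_ge1Dx (a * (e1 - 1) + b * (e2 - 1)); rewrite /q; lra.
  apply: (@le_trans _ _ (expR (t * - m) * expR (a * (e1 - 1) + b * (e2 - 1)))).
    by apply: ler_wpM2l; first exact: ltW.
  rewrite -expRD ler_expR.
  have sh : e2 <= e1 - 2 * t by exact: expR_sinh.
  have h1 : t * - m + (a * (e1 - 1) + b * (e2 - 1)) <= q * (e1 - 1 - t).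
    rewrite /m /q; nra.
  apply: (le_trans h1).
  have T0p : 0 < T0 by rewrite /T0; lra.
  set l := t / T0.
  have lT : l * T0 = t by rewrite /l divfK // gt_eqF.
  have l01 : 0 <= l <= 1.
    apply/andP; split; first by rewrite /l divr_ge0 // ltW.
    by rewrite /l ler_pdivrMr // mul1r.
  have hs := expR_scale l01 (ltW T0p).
  rewrite lT -/e1 in hs.
  have h2 : q * (e1 - 1 - t) <= l ^+ 2 * (2 * expR (1/2) - q * (1 + T0)).
    rewrite -eT -lT; nra.
  apply: (le_trans h2).
  have hq : L <= 5/2 -> 2/5 * (5/2 - L) <= q.
    move=> L52.
    have e32 : 1/5 <= expR (- (3/2) : R).
      rewrite expRN; have := expR32_ub; have := expR_gt0 (3/2 : R) => p u.
      rewrite ler_pdivrMr // mulrC -ler_pdivrMr ?invr_gt0 // invrK; lra.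
    have ex : 1 + (- (L - 3/2)) <= expR (- (L - 3/2)) by exact: expR_ge1Dx.
    have eNL : expR (- L) = expR (- (3/2)) * expR (- (L - 3/2)) by rewrite -expRD; congr expR; ring.
    have qNL : q = 2 * expR (- L).
      rewrite expRN eL invf_div; by field.
    rewrite qNL eNL; nra.
  have hp := region1_poly L0 (ltW qp) eh1 hq.
  have hX : 2 * expR (1/2) - q * (1 + T0) <= T0 ^+ 2 / L by rewrite ler_pdivlMr // mulrC.
  have -> : t ^+ 2 / L = l ^+ 2 * (T0 ^+ 2 / L) by rewrite -[in LHS]lT exprMn mulrA.
  by apply: ler_wpM2l => //; apply: exprn_ge0; case/andP: l01.
-
  have t12 : 1/2 <= t by rewrite /T0 in htT; lra.
  have e21 : e2 <= 1 by rewrite /e2 expR_le1; lra.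
  have hG : 1 - q + a * e1 + b * e2 <= 1 + a * (e1 - 1) by rewrite /q; nra.
  set y := 1 + a * (e1 - 1).
  have hy : y <= e1 * expR (y * e2 - 1).
    have := expR_ge1Dx (y * e2 - 1) => h.
    have : y = e1 * (y * e2) by rewrite mulrCA e12 mulr1.
    nra.
  apply: (@le_trans _ _ (expR (t * - m) * (e1 * expR (y * e2 - 1)))).
    apply: ler_wpM2l; [exact: ltW | exact: le_trans hG hy].
  rewrite /e1 mulrA -!expRD ler_expR.
  have h1 : t * - m + t + (y * e2 - 1) <= t * (1 + q) + e2 - 1.
    rewrite /y /m /q.
    have : (1 + a * (e1 - 1)) * e2 = e2 + a - a * e2 by rewrite mulrDl mul1r -mulrA mulrBl e12 mul1r; ring.
    move=> ->; nra.
  apply: (le_trans h1).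
  have hqL : q * (2 * L + 1/2) <= 2.
    have h34 := expR34_lb.
    have : expR L = expR (3/4) * expR (L - 3/4) by rewrite -expRD; congr expR; ring.
    have := expR_ge1Dx (L - 3/4) => ex eLs.
    have : 2 * L + 1/2 <= expR L by rewrite eLs; nra.
    nra.
  have hem : e2 <= q / 3.
    have : e2 <= expR (- T0) by rewrite /e2 ler_expR; lra.
    have : expR (- T0) = expR (- L) * (expR (1/2))^-1 by rewrite /T0 opprD expRD [expR (- (1/2))]expRN.
    have : expR (- L) = q / 2 by rewrite expRN eL invf_div.
    move=> -> ->.
    have ih : (expR (1/2 : R))^-1 <= 2/3.
      rewrite -[2/3 : R]invf_div lef_pV2 ?posrE ?expR_gt0 //; lra.
    nra.
  have hp := region2_poly L0 (_ : 0 <= q <= 1) hqL (ltW htT) hem.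
  rewrite ler_pdivlMr // mulrC; apply: hp.
  apply/andP; split; lra.
Qed.
End S.
Section M.
Variable R : realType.
Variable mu : probability cantor R.
Variables i j : nat.

Definition cyl (k : nat) : set cantor := [set w : cantor | w k].
Lemma mcyl k : measurable (cyl k).
Proof. apply: sub_gen_smallest; exists k => //. Qed.

Definition cylb (k : nat) (x : bool) : set cantor := if x then cyl k else ~` cyl k.
Lemma mcylb k x : measurable (cylb k x).
Proof. by case: x; [exact: mcyl | apply: measurableC; exact: mcyl]. Qed.

Definition A (x y : bool) : set cantor := cylb i x `&` cylb j y.
Lemma mA x y : measurable (A x y).
Proof. by apply: measurableI; apply: mcylb. Qed.

Lemma in_cyl k (w : cantor) : (w \in cyl k) = w k.
Proof. by apply/idP/idP; rewrite inE. Qed.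
Lemma in_cylb k x (w : cantor) : (w \in cylb k x) = (w k == x).
Proof. by case: x; rewrite /cylb ?in_setC in_cyl; case: (w k). Qed.

Lemma indicA x y (w : cantor) : \1_(A x y) w = ((w i == x) && (w j == y))%:R :> R.
Proof. by rewrite /indic /A in_setI !in_cylb. Qed.

Definition pm x y : R := fine (mu (A x y)).
Lemma pmE x y : mu (A x y) = (pm x y)%:E.
Proof.
rewrite /pm fineK // ge0_fin_numE //.
by apply: (le_lt_trans (probability_le1 mu (mA x y))); rewrite ltry.
Qed.
Lemma pm_ge0 x y : 0 <= pm x y.
Proof. by rewrite /pm fine_ge0. Qed.

Lemma decomp (v : bool -> bool -> R) (w : cantor) : v (w i) (w j) =
  v true true * \1_(A true true) w + v true false * \1_(A true false) w
  + v false true * \1_(A false true) w + v false false * \1_(A false false) w.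
Proof.
rewrite !indicA; case: (w i); case: (w j) => /=; rewrite !mulr1 !mulr0 ?addr0 ?add0r //.
Qed.

Lemma int_term (c : R) (B : set cantor) : 0 <= c -> measurable B ->
  (\int[mu]_w (c * \1_(B) w)%:E = c%:E * mu B)%E.
Proof.
move=> c0 mB.
rewrite (@integralZl_indic _ _ _ mu setT measurableT (fun _ => B)) //; last first.
  by move=> /lt_le_trans /(_ c0); rewrite ltxx.
by rewrite integral_indic // setIT.
Qed.

Lemma mterm (c : R) (B : set cantor) : measurable B ->
  measurable_fun setT (fun w : cantor => (c * \1_(B) w)%:E).
Proof.
move=> mB; apply/measurable_EFinP; apply: measurable_funM.
  exact: measurable_cst.
exact: measurable_indic.
Qed.

Lemma g0 (c : R) (B : set cantor) (w : cantor) : 0 <= c -> (0 <= (c * \1_(B) w)%:E)%E.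
Proof. by move=> c0; rewrite lee_fin mulr_ge0. Qed.

Lemma Edecomp (v : bool -> bool -> R) : (forall x y, 0 <= v x y) ->
  ('E_mu[fun w => v (w i) (w j)] =
  (v true true * pm true true + v true false * pm true false
   + v false true * pm false true + v false false * pm false false)%:E)%E.
Proof.
move=> v0; rewrite unlock.
under eq_integral do rewrite decomp !EFinD.
have g0 c B (w : cantor) : 0 <= c -> (0 <= (c * \1_(B) w)%:E)%E.
  by move=> c0; rewrite lee_fin mulr_ge0.
rewrite ge0_integralD //; last 4 first.
- by move=> w _; rewrite !adde_ge0 // g0.
- by apply: emeasurable_funD; [apply: emeasurable_funD|]; apply: mterm; apply: mA.
- by move=> w _; apply: g0.
- exact: mterm (mA _ _).
rewrite ge0_integralD //; last 4 first.
- by move=> w _; rewrite !adde_ge0 // g0.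
- by apply: emeasurable_funD; apply: mterm; apply: mA.
- by move=> w _; apply: g0.
- exact: mterm (mA _ _).
rewrite ge0_integralD //; last 4 first.
- by move=> w _; apply: g0.
- exact: mterm (mA _ _).
- by move=> w _; apply: g0.
- exact: mterm (mA _ _).
rewrite !int_term; try exact: mA; try exact: v0.
by rewrite !EFinD !EFinM -!pmE.
Qed.
End M.
End Aux.

Theorem lemma17 (R : realType) (mu : probability cantor R) (i j : nat)
    (t : R) (ht : 0 <= t) :
  ('E_mu[fun w => expR (t * ((X i w - pE mu i) - (X j w - pE mu j)))]
    <= (subg_bound t (pE mu i + pE mu j - 2 * rE mu i j))%:E)%E.
Proof.
pose a := Aux.pm mu i j true false.
pose b := Aux.pm mu i j false true.
pose r := Aux.pm mu i j true true.
pose d := Aux.pm mu i j false false.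
have a0 : 0 <= a := Aux.pm_ge0 _ _ _ _ _.
have b0 : 0 <= b := Aux.pm_ge0 _ _ _ _ _.
have r0 : 0 <= r := Aux.pm_ge0 _ _ _ _ _.
have d0 : 0 <= d := Aux.pm_ge0 _ _ _ _ _.
have hpi : pE mu i = a + r.
  have h : ('E_mu[X i] = _)%E := Aux.Edecomp mu i j (v := fun x y => x%:R)
    (fun x y => ler0n _ _).
  by rewrite /pE h /= /a /r; lra.
have hpj : pE mu j = b + r.
  have h : ('E_mu[X j] = _)%E := Aux.Edecomp mu i j (v := fun x y => y%:R)
    (fun x y => ler0n _ _).
  by rewrite /pE h /= /b /r; lra.
have hr : rE mu i j = r.
  have h : ('E_mu[X i \* X j] = _)%E := Aux.Edecomp mu i j (v := fun x y => x%:R * y%:R)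
    (fun x y => mulr_ge0 (ler0n _ _) (ler0n _ _)).
  by rewrite /rE h /= /r; lra.
have htot : r + a + b + d = 1.
  have h : ('E_mu[cst (1%R:R)] = _)%E := Aux.Edecomp mu i j (v := fun x y => 1%R)
    (fun x y => ler01).
  rewrite expectation_cst in h.
  by move: h => [] ->; rewrite /r /a /b /d !mul1r.
set p1 := pE mu i in hpi *. set p2 := pE mu j in hpj *.
have h : ('E_mu[fun w => expR (t * ((X i w - p1) - (X j w - p2)))] = _)%E :=
  Aux.Edecomp mu i j (v := fun x y => expR (t * ((x%:R - p1) - (y%:R - p2))))
    (fun x y => expR_ge0 _).
rewrite h lee_fin /= hr hpi hpj.
have -> : a + r + (b + r) - 2 * r = a + b by ring.
have := Aux.main_real a0 b0 (_ : a + b <= 1) ht.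
  rewrite -/a -/b -/r -/d.
  have -> : t * ((1 - (a + r)) - (1 - (b + r))) = t * - (a - b) by ring.
  have -> : t * ((0 - (a + r)) - (0 - (b + r))) = t * - (a - b) by ring.
  have -> : t * ((1 - (a + r)) - (0 - (b + r))) = t * (1 - (a - b)) by ring.
  have -> : t * ((0 - (a + r)) - (1 - (b + r))) = t * (-1 - (a - b)) by ring.
  have -> : 1 - (a + b) = r + d by lra.
  move=> H; apply: (le_trans _ (H _)); [rewrite le_eqVlt; apply/orP; left; apply/eqP; ring | lra].
Qed.
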